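(* Let $\Theta$ be a branch of a tableau of $\mathbf{TAB}_{\mathbf{IB}}$. For every nominal $i$ occurring in $\Theta$, the set $T^\Theta(i)$ is finite.
   Context: Hybrid language: fix disjoint countably infinite sets $\mathbf{Prop}$ and $\mathbf{Nom}$ (nominals). Formulas: $\varphi ::= p \mid i \mid \neg\varphi \mid \varphi\land\varphi \mid \Diamond\varphi \mid @_i\varphi$. A tableau of $\mathbf{TAB}_{\mathbf{IB}}$ is a tree whose nodes are formulas of the form $@_i\varphi$, with a root formula $@_{i_0}\varphi_0$ ($i_0$ not occurring in $\varphi_0$); a branch is a maximal path, and $\varphi\in\Theta$ means $\varphi$ occurs on branch $\Theta$. $@_i\varphi$ is a quasi-subformula of $@_j\psi$ if $\varphi$ is a subformula of $\psi$, or $\varphi=\neg\chi$ with $\chi$ a subformula of $\psi$. For a nominal $i$ occurring in $\Theta$, $T^\Theta(i)=\{\varphi \mid @_i\varphi\in\Theta$ and $@_i\varphi$ is a quasi-subformula of the root formula of $\Theta\}$. *)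

(* Defs.v *)
From Stdlib Require Import Ensembles Finite_sets.

(* Propositional variables and nominals: two disjoint countably infinite sets,
   both represented by nat but kept apart by distinct constructors. *)
Definition prop := nat.
Definition nom := nat.

Inductive form : Type :=
| FProp : prop -> form
| FNom : nom -> form
| FNeg : form -> form
| FAnd : form -> form -> form
| FDia : form -> form
| FAt : nom -> form -> form.

Inductive subformula : form -> form -> Prop :=
| sub_refl : forall phi, subformula phi phi
| sub_neg : forall phi psi, subformula phi psi -> subformula phi (FNeg psi)
| sub_andl : forall phi psi chi, subformula phi psi -> subformula phi (FAnd psi chi)
| sub_andr : forall phi psi chi, subformula phi chi -> subformula phi (FAnd psi chi)
| sub_dia : forall phi psi, subformula phi psi -> subformula phi (FDia psi)
| sub_at : forall phi i psi, subformula phi psi -> subformula phi (FAt i psi).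

(* A node of a tableau: the formula @_i phi, represented as the pair (i, phi). *)
Definition atf := (nom * form)%type.

Definition quasi_subformula (a b : atf) : Prop :=
  subformula (snd a) (snd b) \/
  exists chi, snd a = FNeg chi /\ subformula chi (snd b).

Fixpoint nom_occurs (i : nom) (phi : form) : Prop :=
  match phi with
  | FProp _ => False
  | FNom j => j = i
  | FNeg psi => nom_occurs i psi
  | FAnd psi chi => nom_occurs i psi \/ nom_occurs i chi
  | FDia psi => nom_occurs i psi
  | FAt j psi => j = i \/ nom_occurs i psi
  end.

Definition nom_occurs_atf (i : nom) (a : atf) : Prop :=
  fst a = i \/ nom_occurs i (snd a).

(* A branch (maximal path from the root) of a tableau, possibly infinite:
   the sequence of its nodes, indexed from the root.  [Theta n = None] means
   the branch has fewer than n+1 nodes. *)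
Record branch : Type := {
  br_nodes : nat -> option atf;
  br_root : atf;
  br_root_ok : br_nodes 0 = Some br_root;
  br_prefix : forall n, br_nodes (S n) <> None -> br_nodes n <> None;
  br_root_fresh : ~ nom_occurs (fst br_root) (snd br_root)
}.

Definition on_branch (Th : branch) (a : atf) : Prop :=
  exists n, br_nodes Th n = Some a.

Definition nom_in_branch (Th : branch) (i : nom) : Prop :=
  exists a, on_branch Th a /\ nom_occurs_atf i a.

Definition T_set (Th : branch) (i : nom) : Ensemble form :=
  fun phi => on_branch Th (i, phi) /\ quasi_subformula (i, phi) (br_root Th).

(* Main.v *)
Require Import Defs.
From Stdlib Require Import Ensembles Finite_sets Finite_sets_facts List.

Fixpoint subs (psi : form) : list form :=
  psi :: match psi with
         | FProp _ | FNom _ => nil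
         | FNeg p | FDia p | FAt _ p => subs p
         | FAnd p q => subs p ++ subs q
         end.

Lemma subs_ok phi psi : subformula phi psi -> List.In phi (subs psi).
Proof.
  induction 1; simpl; auto.
  - destruct phi; simpl; auto.
  - right; apply in_or_app; auto.
  - right; apply in_or_app; auto.
Qed.

Lemma list_finite (l : list form) : Finite form (fun x => List.In x l).
Proof.
  induction l as [|a l IH].
  - replace (fun x : form => List.In x nil) with (Empty_set form).
    + constructor.
    + apply Extensionality_Ensembles; split; intros x H; inversion H.
  - replace (fun x : form => List.In x (a :: l))
      with (Union form (Singleton form a) (fun x => List.In x l)).
    + apply Union_preserves_Finite; auto. apply Singleton_is_finite.
    + apply Extensionality_Ensembles; split; intros x H.
      * destruct H as [x H|x H]; [inversion H; left; auto | right; auto].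
      * destruct H as [H|H]; [left; rewrite H; constructor | right; auto].
Qed.

Theorem lemma2 (Th : branch) (i : nom) :
  nom_in_branch Th i -> Finite form (T_set Th i).
Proof.
  intros _.
  apply Finite_downward_closed with
    (A := fun x => List.In x (subs (snd (br_root Th)) ++
                      map FNeg (subs (snd (br_root Th))))).
  - apply list_finite.
  - intros x [_ [H|[chi [E H]]]]; simpl in *; apply in_or_app.
    + left; apply subs_ok; auto.
    + right; subst; apply in_map; apply subs_ok; auto.
Qed.
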